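(* Let $n\geq1$. In $M_n$, both the left-lcm and the right-lcm of the generators $\rho_1,\rho_2,\dots,\rho_n$ are equal to $\rho_n^{\,n}=\rho_1(\rho_n\rho_1)^{n-1}$.
   Context: $M_n$ denotes the monoid with generators $\rho_1,\dots,\rho_n$ and relations $\rho_1\rho_n\rho_i=\rho_{i+1}\rho_n$ for $1\leq i\leq n-1$. The right-lcm of a set of elements is a common right-multiple of all of them that left-divides every common right-multiple; the left-lcm is defined symmetrically with left-multiples and right-divisibility. *)

(* Defs.v *)
From mathcomp Require Import all_boot.
Set Implicit Arguments. Unset Strict Implicit. Unset Printing Implicit Defensive.

(* The monoid M_n is presented by generators
   rho_1..rho_n (encoded as the letters 1..n, a word is a seq nat) and
   relations rho_1 rho_n rho_i = rho_(i+1) rho_n for 1 <= i <= n-1.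
   Elements of M_n are words over {1..n} modulo the congruence [meq n]. *)

Definition word (n : nat) (w : seq nat) : bool := all (fun a => 0 < a <= n) w.

Inductive mrel (n : nat) : seq nat -> seq nat -> Prop :=
| mrel_gen (i : nat) : 1 <= i <= n - 1 -> mrel n [:: 1; n; i] [:: i.+1; n].

Inductive meq (n : nat) : seq nat -> seq nat -> Prop :=
| meq_refl w : meq n w w
| meq_sym u v : meq n u v -> meq n v u
| meq_trans u v w : meq n u v -> meq n v w -> meq n u w
| meq_rel u v x y : mrel n x y -> meq n (u ++ x ++ v) (u ++ y ++ v).

Definition ldiv (n : nat) (a b : seq nat) : Prop :=
  exists c, word n c /\ meq n (a ++ c) b.

Definition rdiv (n : nat) (a b : seq nat) : Prop :=
  exists c, word n c /\ meq n (c ++ a) b.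

Definition is_right_lcm (n : nat) (S : seq nat -> Prop) (m : seq nat) : Prop :=
  word n m /\ (forall s, S s -> ldiv n s m) /\
  (forall w, word n w -> (forall s, S s -> ldiv n s w) -> ldiv n m w).

Definition is_left_lcm (n : nat) (S : seq nat -> Prop) (m : seq nat) : Prop :=
  word n m /\ (forall s, S s -> rdiv n s m) /\
  (forall w, word n w -> (forall s, S s -> rdiv n s w) -> rdiv n m w).

Definition generators (n : nat) (s : seq nat) : Prop :=
  exists2 i, 1 <= i <= n & s = [:: i].

(* Main.v *)
Require Import Defs.
From mathcomp Require Import all_boot zify.
Set Implicit Arguments. Unset Strict Implicit. Unset Printing Implicit Defensive.

Lemma meq_ctx n p u v s : meq n u v -> meq n (p ++ u ++ s) (p ++ v ++ s).
Proof.
elim=> [w|u' v' _ IH|u' v' w' _ IH1 _ IH2|u' v' x y r].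
- exact: meq_refl.
- exact: meq_sym.
- exact: meq_trans IH1 IH2.
- have E z : p ++ (u' ++ z ++ v') ++ s = (p ++ u') ++ z ++ (v' ++ s) by rewrite !catA.
  rewrite !E; exact: meq_rel.
Qed.

Lemma meq_l n p u v : meq n u v -> meq n (p ++ u) (p ++ v).
Proof. by move=> h; have := meq_ctx p [::] h; rewrite !cats0. Qed.
Lemma meq_r n u v s : meq n u v -> meq n (u ++ s) (v ++ s).
Proof. by move=> h; have := meq_ctx [::] s h. Qed.

Notation B n k := (nseq k n).

Lemma R0 n i : 0 < i < n -> meq n [:: 1; n; i] [:: i.+1; n].
Proof.
move=> h; have := @meq_rel n [::] [::] _ _ (mrel_gen (i:=i) (_ : 1 <= i <= n - 1)).
rewrite !cats0 /=; apply; lia.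
Qed.

Lemma Grel n i m : 0 < i -> 0 < m -> i + m <= n ->
  meq n (i :: B n i ++ [:: m]) ((i + m) :: B n i).
Proof.
elim: i m => [//|i IH] m _ m0 im.
case: i IH im => [|i] IH im.
  by rewrite /= add1n; apply: R0; lia.
apply: (meq_trans (v := [:: 1; n] ++ (i.+1 :: B n i.+1 ++ [:: m]))).
  have := meq_r (B n i.+1 ++ [:: m]) (meq_sym (R0 (_ : 0 < i.+1 < n))).
  rewrite /=; apply; lia.
apply: (meq_trans (v := [:: 1; n] ++ ((i.+1 + m) :: B n i.+1))).
  by apply: meq_l; apply: IH => //; lia.
have := meq_r (B n i.+1) (R0 (_ : 0 < i.+1 + m < n)).
rewrite /= addSn; apply; lia.
Qed.

Lemma nseqS' k (x : nat) : nseq k.+1 x = rcons (nseq k x) x.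
Proof. by elim: k => //= k ->. Qed.

Lemma Orel n i m : 0 < i < n -> 0 < m < n -> n < i + m ->
  meq n (i :: B n i ++ [:: m]) ((i + m - n) :: B n i.+1).
Proof.
move=> hi hm him; set a := i + m - n.
have G1 := @Grel n (n - m) m ltac:(lia) ltac:(lia) ltac:(lia).
have G2 := @Grel n a (n - m) ltac:(lia) ltac:(lia) ltac:(lia).
have -> : B n i.+1 = B n a ++ B n (n - m).+1 by rewrite -nseqD; congr nseq; lia.
have -> : B n (n - m).+1 = (n - m + m) :: B n (n - m).
  by have -> : n - m + m = n by lia.
apply: meq_sym.
apply: (meq_trans (v := a :: B n a ++ ((n - m) :: B n (n - m) ++ [:: m]))).
  by apply: (meq_l (a :: B n a)); apply: meq_sym.
have -> : a :: B n a ++ ((n - m) :: B n (n - m) ++ [:: m]) =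
   (a :: B n a ++ [:: n - m]) ++ (B n (n - m) ++ [:: m]) by rewrite /= -!catA.
apply: (meq_trans (meq_r _ G2)).
have -> : a + (n - m) = i by lia.
rewrite cat_cons catA -nseqD.
have -> : a + (n - m) = i by lia.
exact: meq_refl.
Qed.

Lemma Zc n k : 0 < k <= n -> meq n (k :: B n n.+1) (B n n.+1 ++ [:: k]).
Proof.
move=> hk; case: (ltnP k n) => hkn; last first.
  have -> : k = n by lia.
  by rewrite cats1 -nseqS'; exact: meq_refl.
have G1 := @Grel n (n - k) k ltac:(lia) ltac:(lia) ltac:(lia).
have G2 := @Grel n k (n - k) ltac:(lia) ltac:(lia) ltac:(lia).
have E1 : B n n.+1 = B n k ++ B n (n - k).+1 by rewrite -nseqD; congr nseq; lia.
have E2 : B n (n - k).+1 = (n - k + k) :: B n (n - k) by have -> : n - k + k = n by lia.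
rewrite {1}E1 E2.
apply: (meq_trans (v := k :: B n k ++ ((n - k) :: B n (n - k) ++ [:: k]))).
  by apply: (meq_l (k :: B n k)); apply: meq_sym.
have -> : k :: B n k ++ ((n - k) :: B n (n - k) ++ [:: k]) =
   (k :: B n k ++ [:: n - k]) ++ (B n (n - k) ++ [:: k]) by rewrite /= -!catA.
apply: (meq_trans (meq_r _ G2)).
rewrite cat_cons catA -nseqD.
have -> : k + (n - k) = n by lia.

exact: meq_refl.
Qed.

Lemma Zw n w : word n w -> meq n (w ++ B n n.+1) (B n n.+1 ++ w).
Proof.
elim: w => [_|x w IH] /=; first by rewrite cats0; exact: meq_refl.
move/andP=> [hx hw].
apply: (meq_trans (v := x :: B n n.+1 ++ w)).
  exact: (meq_l [:: x] (IH hw)).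
have := meq_r w (Zc hx); rewrite -catA /=; apply.
Qed.

Lemma mrel_word n x y : mrel n x y -> word n x /\ word n y.
Proof. case=> i hi; rewrite /word /=; split; apply/and4P || apply/and3P; try split; lia. Qed.

Lemma meq_word n u v : meq n u v -> (word n u <-> word n v).
Proof.
elim=> [w|u' v' _ IH|u' v' w' _ IH1 _ IH2|u' v' x y r] //.
- by rewrite IH.
- by rewrite IH1.
- have [hx hy] := mrel_word r.
  by rewrite /word !all_cat -!/(word n _) hx hy.
Qed.

Definition state := (nat * seq (nat * nat))%type.

Definition insb (n : nat) (s : state) : state :=
  match s with
  | (e0, [::]) => (e0.+1, [::])
  | (e0, (y, e) :: P) => if e < n then (e0, (y, e.+1) :: P) else (e0 + n.+1, (y, 0) :: P)
  end.

Fixpoint insk (n e0 : nat) (L : seq (nat * nat)) (k : nat) {struct L} : state :=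
  match L with
  | [::] => (e0, [:: (k, 0)])
  | (y, e) :: P => if e != y then (e0, (k, 0) :: L)
                   else if y + k < n then iter y (insb n) (insk n e0 P (y + k))
                   else if y + k == n then iter y.+1 (insb n) (e0, P)
                   else iter y.+1 (insb n) (insk n e0 P (y + k - n))
  end.

Definition ins n (s : state) x := if x == n then insb n s else insk n s.1 s.2 x.
Definition F n (s : state) w := foldl (ins n) s w.

Definition bok n (p : nat * nat) := (0 < p.1 < n) && (p.2 <= n).
Definition vst n (s : state) := all (bok n) s.2 && all (fun p => p.2 != p.1) (behead s.2).

Lemma F_cat n s u v : F n s (u ++ v) = F n (F n s u) v.
Proof. exact: foldl_cat. Qed.
Lemma F_cons n s x u : F n s (x :: u) = F n (ins n s x) u.
Proof. by []. Qed.
Lemma F_B n s m : F n s (B n m) = iter m (insb n) s.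
Proof.
elim: m s => [//|m IH] s; by rewrite iterSr -IH /= /ins eqxx.
Qed.
Lemma ins_lt n s x : x < n -> ins n s x = insk n s.1 s.2 x.
Proof. by rewrite /ins; case: eqP => // ->; rewrite ltnn. Qed.
Lemma ins_n n s : ins n s n = insb n s.
Proof. by rewrite /ins eqxx. Qed.

Definition sh (d : nat) (s : state) : state := (s.1 + d, s.2).
Lemma insb_sh n d s : insb n (sh d s) = sh d (insb n s).
Proof.
case: s => e0 [|[y e] P] /=; rewrite /sh /=; first by rewrite addSn.
by case: ifP => _ //=; rewrite addnAC.
Qed.
Lemma iter_sh n d m s : iter m (insb n) (sh d s) = sh d (iter m (insb n) s).
Proof. by elim: m => //= m ->; rewrite insb_sh. Qed.
Lemma insk_sh n d e0 L k : insk n (e0 + d) L k = sh d (insk n e0 L k).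
Proof.
elim: L e0 k => [|[y e] P IH] e0 k //=.
case: ifP => _ //.
case: ifP => _; first by rewrite IH iter_sh.
case: ifP => _. by have := iter_sh n d y.+1 (e0, P). idtac.
by rewrite IH iter_sh insb_sh.
Qed.
Lemma ins_sh n d s x : ins n (sh d s) x = sh d (ins n s x).
Proof. rewrite /ins; case: eqP => _; first exact: insb_sh. by case: s => e0 L; rewrite /sh /= insk_sh. Qed.
Lemma F_sh n d s w : F n (sh d s) w = sh d (F n s w).
Proof. by elim: w s => //= x w IH s; rewrite ins_sh IH. Qed.

Lemma iter_nil n m e0 : iter m (insb n) (e0, [::]) = (e0 + m, [::]).
Proof. by elim: m => [|m /= ->]; rewrite ?addn0 ?addnS. Qed.
Lemma iter_small n m e0 y e P : e + m <= n ->
  iter m (insb n) (e0, (y, e) :: P) = (e0, (y, e + m) :: P).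
Proof.
elim: m => [|m IH] h /=; first by rewrite addn0.
rewrite IH; last lia. by rewrite /= ifT ?addnS //; lia.
Qed.
Lemma iter_gen n m e0 y e P : e <= n -> exists e0' e',
  iter m (insb n) (e0, (y, e) :: P) = (e0', (y, e') :: P) /\ e' <= n /\ e0 <= e0' /\
  (e + m <= n -> e0' = e0 /\ e' = e + m) /\ (n < e + m -> e0 + n.+1 <= e0').
Proof.
move=> he; elim: m => [|m [e0' [e' [E [h1 [h2 [h3 h4]]]]]]].
  exists e0, e; rewrite addn0; split=> //; split=> //; split=> //; split=> //; lia.
rewrite /= E /=; case: ifP => hl.
  exists e0', e'.+1; split=> //; split; first lia. split=> //.
  split; first by move=> h; have [? ?] := h3 ltac:(lia); split=> //; lia.
  move=> h; apply: h4; lia.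
exists (e0' + n.+1), 0; split=> //; split=> //; split; first lia.
split; first (move=> h; have [? ?] := h3 ltac:(lia); lia).
move=> h; lia.
Qed.
Lemma iter_z n s : vst n s -> iter n.+1 (insb n) s = sh n.+1 s.
Proof.
case: s => e0 [|[y e] P]; first by rewrite iter_nil.
move=> hv; have he : e <= n.
  by move: hv; rewrite /vst /bok /=; case/andP; case/andP; case/andP.
have E : n.+1 = e + (1 + (n - e)) by lia.
rewrite E !iterD iter_small; last lia.
rewrite /= ifF; last lia.
rewrite iter_small; last lia.
rewrite /sh /= add0n; congr (_, _); lia.
Qed.

Definition nred (p : nat * nat) := p.2 != p.1.

Lemma vst_cons n e0 y e P :
  vst n (e0, (y, e) :: P) = [&& 0 < y < n, e <= n, all (bok n) P & all nred P].
Proof.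
rewrite /vst /bok /=; case: P => [|p P] /=; first by rewrite !andbT.
by rewrite !andbA.
Qed.
Lemma vst_nil n e0 : vst n (e0, [::]).
Proof. by []. Qed.
Lemma vst_tail n e0 y e P : vst n (e0, (y, e) :: P) -> vst n (e0, P).
Proof.
rewrite vst_cons => /and4P [_ _ h1 h2]; rewrite /vst /= h1 /=.
by move: h2; clear h1; case: P => //= p P /andP [].
Qed.

Lemma vst_insb n s : vst n s -> vst n (insb n s).
Proof.
case: s => e0 [|[y e] P] //=; rewrite vst_cons.
case/and4P=> h1 h2 h3 h4; case: ifP => h; rewrite vst_cons h1 h3 h4 /= ?andbT //.
Qed.
Lemma vst_iter n m s : vst n s -> vst n (iter m (insb n) s).
Proof. by elim: m => //= m IH /IH; apply: vst_insb. Qed.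

Lemma vst_insk n e0 L k : vst n (e0, L) -> 0 < k < n -> vst n (insk n e0 L k).
Proof.
elim: L e0 k => [|[y e] P IH] e0 k.
  by move=> _ hk; rewrite /= /vst /bok /= hk.
move=> hv hk /=; have hP := vst_tail hv.
move: (hv); rewrite vst_cons => /and4P [hy he hbP hnP].
case: ifP => hey.
  rewrite /vst /bok /= hk /= hy he hbP /= hey hnP; by [].
case: ifP => h1; first by apply: vst_iter; apply: IH => //; lia.
case: ifP => h2; first by apply: vst_insb; exact: vst_iter.
by apply: vst_insb; apply: vst_iter; apply: IH => //; lia.
Qed.

Lemma vst_ins n s x : vst n s -> 0 < x <= n -> vst n (ins n s x).
Proof.
move=> hv hx; rewrite /ins; case: eqP => h; first exact: vst_insb.
case: s hv => e0 L hv; apply: vst_insk => //; lia.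
Qed.
Lemma vst_F n s w : vst n s -> word n w -> vst n (F n s w).
Proof.
elim: w s => //= x w IH s hv /andP [hx hw]; apply: IH => //; exact: vst_ins.
Qed.

Fixpoint wl n (L : seq (nat * nat)) : seq nat :=
  match L with [::] => [::] | (y, e) :: P => wl n P ++ y :: B n e end.
Definition wst n (s : state) := B n s.1 ++ wl n s.2.

Lemma word_cat n u v : word n (u ++ v) = word n u && word n v.
Proof. exact: all_cat. Qed.
Lemma word_B n m : 0 < n -> word n (B n m).
Proof. by move=> h; rewrite /word all_nseq /= h leqnn orbT. Qed.

Lemma word_wl n L : 0 < n -> all (bok n) L -> word n (wl n L).
Proof.
move=> n0; elim: L => [|[y e] P IH] //= /andP [hb hP].
move: hb; rewrite /bok /= => /andP [hy _].
rewrite word_cat IH //= word_B // andbT /=; lia.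
Qed.
Lemma word_wst n s : 0 < n -> vst n s -> word n (wst n s).
Proof. by move=> n0 /andP [h _]; rewrite word_cat word_B // word_wl. Qed.

Lemma meq_eq n u v : u = v -> meq n u v.
Proof. by move=> ->; exact: meq_refl. Qed.

Lemma snd_insb n s : 0 < n -> vst n s -> meq n (wst n (insb n s)) (wst n s ++ [:: n]).
Proof.
move=> n0; case: s => e0 [|[y e] P] hv.
  by apply: meq_eq; rewrite /wst !cats0 cats1 -nseqS'.
move: (hv); rewrite vst_cons => /and4P [hy he hbP _].
rewrite /=; case: ifP => h.
  by apply: meq_eq; rewrite /wst /= -!catA /= cats1 -nseqS'.
have -> : e = n by lia.
rewrite /wst /= -!catA /= nseqD -catA.
apply: meq_l; apply: meq_sym.
have -> : y :: B n n ++ [:: n] = [:: y] ++ B n n.+1 by rewrite cats1 /= -nseqS'.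
rewrite catA; apply: Zw; rewrite word_cat word_wl //= andbT; lia.
Qed.

Lemma snd_iter n m s : 0 < n -> vst n s -> meq n (wst n (iter m (insb n) s)) (wst n s ++ B n m).
Proof.
move=> n0 hv; elim: m => [|m IH]; first by rewrite cats0; exact: meq_refl.
apply: meq_trans (snd_insb n0 (vst_iter m hv)) _.
rewrite nseqS' -cats1 catA; exact: meq_r.
Qed.

Lemma wst_cons n e0 y e P : wst n (e0, (y, e) :: P) = wst n (e0, P) ++ y :: B n e.
Proof. by rewrite /wst /= catA. Qed.

Lemma snd_insk n e0 L k : vst n (e0, L) -> 0 < k < n ->
  meq n (wst n (insk n e0 L k)) (wst n (e0, L) ++ [:: k]).
Proof.
elim: L e0 k => [|[y e] P IH] e0 k hv hk.
  by apply: meq_eq; rewrite /wst /= cats0.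
have n0 : 0 < n by lia.
have hP := vst_tail hv.
move: (hv); rewrite vst_cons => /and4P [hy he _ _].
rewrite /=; case: ifP => hey.
  by apply: meq_eq; rewrite /wst /= !catA.
move/negbFE/eqP: hey => hey; subst e.
rewrite wst_cons -catA.
case: ifP => h1.
  apply: meq_trans (snd_iter _ n0 (vst_insk hP _)) _; first lia.
  apply: meq_trans (meq_r _ (IH _ _ hP _)) _; first lia.
  rewrite -catA; apply: meq_l; apply: meq_sym; apply: Grel; lia.
case: ifP => h2.
  apply: meq_trans (@snd_iter n y.+1 _ n0 hP) _.
  apply: meq_l; apply: meq_sym; move/eqP: h2 => h2.
  by have := @Grel n y k ltac:(lia) ltac:(lia) ltac:(lia); rewrite h2.
apply: meq_trans (@snd_iter n y.+1 _ n0 (vst_insk hP _)) _; first lia.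
apply: meq_trans (meq_r _ (IH _ _ hP _)) _; first lia.
rewrite -catA; apply: meq_l; apply: meq_sym; apply: Orel; lia.
Qed.

Lemma snd_ins n s x : 0 < x <= n -> vst n s -> meq n (wst n (ins n s x)) (wst n s ++ [:: x]).
Proof.
move=> hx hv; rewrite /ins; case: eqP => h.
  by rewrite h; apply: snd_insb => //; lia.
case: s hv => e0 L hv; apply: snd_insk => //; lia.
Qed.

Lemma snd_F n s w : vst n s -> word n w -> meq n (wst n (F n s w)) (wst n s ++ w).
Proof.
elim: w s => [|x w IH] s hv /=; first by move=> _; rewrite /F /= cats0; exact: meq_refl.
case/andP=> hx hw.
apply: meq_trans (IH _ (vst_ins hv hx) hw) _.
rewrite -cat1s catA; apply: meq_r; exact: snd_ins.
Qed.

Lemma Bc n a b (u : seq nat) : B n a ++ (B n b ++ u) = B n (a + b) ++ u.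
Proof. by rewrite catA -nseqD. Qed.
Lemma consB n k (u : seq nat) : n :: B n k ++ u = B n k.+1 ++ u.
Proof. by []. Qed.

Lemma ZC n X x w : vst n X -> 0 < x <= n ->
  F n X (B n n.+1 ++ x :: w) = F n X (x :: B n n.+1 ++ w).
Proof.
move=> hv hx; rewrite F_cat F_B iter_z // F_sh.
rewrite [RHS]F_cons [RHS]F_cat F_B iter_z ?F_sh //; exact: vst_ins.
Qed.

Lemma ZC2 n X a b x w : vst n X -> 0 < a <= n -> 0 < n -> 0 < x <= n ->
  F n X (a :: B n b ++ B n n.+1 ++ x :: w) = F n X (a :: B n b ++ x :: B n n.+1 ++ w).
Proof.
move=> hv ha n0 hx.
have E (L : seq nat) : a :: B n b ++ L = (a :: B n b) ++ L by [].
rewrite !E !(F_cat _ _ (a :: B n b)) ZC //; apply: vst_F => //=.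
by rewrite ha word_B.
Qed.

Lemma insk_nored n e0 L k : (match L with [::] => true | p :: _ => nred p end) ->
  insk n e0 L k = (e0, (k, 0) :: L).
Proof. by case: L => [|[y e] P] // h; rewrite /= ifT. Qed.

Lemma Unf n e0 y P w : vst n (e0, (y, y) :: P) ->
  F n (e0, (y, y) :: P) w = F n (e0, P) (y :: B n y ++ w).
Proof.
rewrite vst_cons => /and4P [hy _ _ hn].
rewrite F_cons ins_lt; last lia.
rewrite /= insk_nored; last by case: P hn => //= p P /andP [].
by rewrite F_cat F_B iter_small ?add0n //; lia.
Qed.

Definition CCprop n (s : state) :=
  (forall i m w, 0 < i -> 0 < m -> i + m <= n ->
     F n s (i :: B n i ++ m :: w) = F n s ((i + m) :: B n i ++ w)) /\
  (forall i m w, 0 < i < n -> 0 < m < n -> n < i + m ->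
     F n s (i :: B n i ++ m :: w) = F n s ((i + m - n) :: B n i.+1 ++ w)).

Lemma CC_base n e0 L : vst n (e0, L) ->
  (match L with [::] => true | p :: _ => nred p end) -> CCprop n (e0, L).
Proof.
move=> hv hL; split.
- move=> i m w hi hm him.
  rewrite F_cons ins_lt; last lia.
  rewrite /= insk_nored // F_cat F_B iter_small ?add0n; last lia.
  rewrite F_cons ins_lt; last lia.
  rewrite /= eqxx /=.
  case: ifP => h1.
    by rewrite ins_lt // F_cat F_B.
  have h2 : i + m = n by lia.
  by rewrite h2 eqxx ins_n F_cat F_B -iterSr.
- move=> i m w hi hm him.
  rewrite F_cons ins_lt; last lia.
  rewrite /= insk_nored // F_cat F_B iter_small ?add0n; last lia.
  rewrite F_cons ins_lt; last lia.
  rewrite /= eqxx /= ifF; last lia.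
  have -> : (i + m == n) = false by apply/eqP; lia.
  rewrite (@ins_lt n _ (i + m - n)); last lia.
  by rewrite ins_n F_cat F_B -iterSr.
Qed.

Ltac fin := congr (F _ _ (_ :: nseq _ _ ++ _)); lia.

Lemma CC n L e0 : vst n (e0, L) -> CCprop n (e0, L).
Proof.
elim: L e0 => [|[y e] P IH] e0 hv; first exact: CC_base.
case: (boolP (e != y)) => hey; first exact: CC_base.
move/negbNE/eqP: hey => hey; subst e.
have hP := vst_tail hv.
have [C1 C2] := IH e0 hP.
move: (hv); rewrite vst_cons => /and4P [hy _ _ _].
have n0 : 0 < n by lia.
split.
- move=> i m w hi hm him; rewrite !Unf //.
  case: (ltngtP (y + i) n) => hyi.
  + rewrite (C1 y i) ?Bc; try lia.
    case: (leqP (y + i + m) n) => hyim.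
    * rewrite (C1 (y + i) m); try lia. rewrite (C1 y (i + m)) ?Bc; try lia. fin.
    * rewrite (C2 (y + i) m); try lia.
      case: (ltngtP (i + m) n) => him2; try lia.
      -- rewrite (C2 y (i + m)) ?Bc; try lia. fin.
      -- rewrite him2 consB Bc. fin.
  + rewrite (C2 y i); try lia.
    set a := y + i - n.
    have E : B n y.+1 ++ B n i ++ m :: w = B n a ++ B n n.+1 ++ m :: w.
      by rewrite Bc Bc; congr (nseq _ _ ++ _); lia.
    rewrite E ZC2; try lia.
    rewrite (C1 a m); try lia.
    case: (ltngtP (i + m) n) => him2; try lia.
    * rewrite (C2 y (i + m)) ?Bc; try lia. fin.
    * rewrite him2 consB Bc Bc. fin.
  + rewrite (C1 y i) ?Bc; try lia.
    rewrite hyi consB ZC; try lia.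
    case: (ltngtP (i + m) n) => him2; try lia.
    * rewrite (C2 y (i + m)) ?Bc; try lia. fin.
    * rewrite him2 consB Bc. fin.
- move=> i m w hi hm him; rewrite !Unf //.
  case: (ltngtP (y + i) n) => hyi.
  + rewrite (C1 y i) ?Bc; try lia.
    rewrite (C2 (y + i) m); try lia.
    rewrite (C1 y (i + m - n)) ?Bc; try lia. fin.
  + rewrite (C2 y i); try lia.
    set a := y + i - n.
    have E : B n y.+1 ++ B n i ++ m :: w = B n a ++ B n n.+1 ++ m :: w.
      by rewrite Bc Bc; congr (nseq _ _ ++ _); lia.
    rewrite E ZC2; try lia.
    case: (leqP (a + m) n) => ham.
    * rewrite (C1 a m); try lia. rewrite (C1 y (i + m - n)) ?Bc; try lia. fin.
    * rewrite (C2 a m); try lia. rewrite (C2 y (i + m - n)) ?Bc; try lia. fin.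
  + rewrite (C1 y i) ?Bc; try lia.
    rewrite hyi consB ZC; try lia.
    rewrite (C1 y (i + m - n)) ?Bc; try lia. fin.
Qed.

Lemma F_rel n s i : vst n s -> 0 < i < n -> F n s [:: 1; n; i] = F n s [:: i.+1; n].
Proof.
case: s => e0 L hv hi; have := (CC hv).1 1 i [::].
by apply => //; lia.
Qed.

Lemma F_meq n s u v : meq n u v -> vst n s -> word n u -> F n s u = F n s v.
Proof.
move=> h; elim: h s => [w|u' v' h IH|u' v' w' h1 IH1 h2 IH2|u' v' x y r] s hv hw //.
- by rewrite IH //; apply/(meq_word h).
- by rewrite IH1 // IH2 //; apply/(meq_word h1).
- rewrite !F_cat; congr (F _ _ v').
  move: hw; rewrite !word_cat => /and3P [hu _ _].
  case: r => i hi; apply: F_rel; first exact: vst_F.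
  lia.
Qed.

Lemma insb_mono n s : s.1 <= (insb n s).1.
Proof. case: s => e0 [|[y e] P] //=; case: ifP => //= _; lia. Qed.
Lemma iter_mono n m s : s.1 <= (iter m (insb n) s).1.
Proof. elim: m => //= m IH; apply: leq_trans IH (insb_mono _ _). Qed.
Lemma insk_mono n e0 L k : e0 <= (insk n e0 L k).1.
Proof.
elim: L e0 k => [|[y e] P IH] e0 k //=.
case: ifP => _ //; case: ifP => _; first by apply: leq_trans (IH e0 (y + k)) (iter_mono _ _ _).
case: ifP => _; first by apply: (iter_mono n y.+1 (e0, P)).
by apply: leq_trans (IH e0 (y + k - n)) (iter_mono _ y.+1 _).
Qed.
Lemma ins_mono n s x : s.1 <= (ins n s x).1.
Proof. rewrite /ins; case: eqP => _; [exact: insb_mono | exact: insk_mono]. Qed.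
Lemma F_mono n s w : s.1 <= (F n s w).1.
Proof. elim: w s => //= x w IH s; apply: leq_trans (ins_mono n s x) (IH _). Qed.

Definition Qb n (L : seq (nat * nat)) :=
  L != [::] /\ ((last (0, 0) L).1 = n.-1 \/ (last (0, 0) L).2 = n).
Definition Inv n (s : state) := n <= s.1 \/ (s.1 = 0 /\ Qb n s.2).

Lemma last_cons2 (p q r : nat * nat) P : last p (r :: P) = last q (r :: P).
Proof. by []. Qed.

Lemma Inv_insb n s : Inv n s -> Inv n (insb n s).
Proof.
case: s => e0 [|[y e] P]; rewrite /Inv /= => -[h|[h1 [h2 h3]]].
- left; lia.
- by [].
- case: ifP => _ /=; left; lia.
- case: ifP => he /=; last (left; lia).
  right; split=> //; split=> //.
  clear h2; case: P h3 => [|p P] /= h3; last by [].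
  case: h3 => h3; [by left | lia].
Qed.
Lemma Inv_iter n m s : Inv n s -> Inv n (iter m (insb n) s).
Proof. by elim: m => //= m IH /IH /Inv_insb. Qed.

Lemma Inv_insk n e0 L k : vst n (e0, L) -> Inv n (e0, L) -> 0 < k < n -> Inv n (insk n e0 L k).
Proof.
move=> hv; rewrite {1}/Inv /= => -[h|[h1 h2]] hk.
  by left; apply: leq_trans h (insk_mono _ _ _ _).
subst e0; elim: L hv h2 k hk => [|[y e] P IH] hv h2 k hk; first by case: h2.
have hP := vst_tail hv.
move: (hv); rewrite vst_cons => /and4P [hy he _ _].
rewrite /=; case: ifP => hey.
  by right; split=> //; split=> //.
move/negbFE/eqP: hey => hey; subst e.
case: P IH hv h2 hP => [|p P] IH hv h2 hP.
- case: h2 => _ /= h2.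
  have hy1 : y = n.-1 by case: h2 => h2; lia.
  rewrite ifF; last lia.
  case: ifP => h3.
    by left; rewrite iter_nil /=; lia.
  rewrite /= iter_small /=; last lia.
  rewrite add0n ifT; last lia.
  right; split=> //; split=> //=; right; lia.
- have h2' : Qb n (p :: P) by case: h2.
  case: ifP => h; first by apply: Inv_iter; apply: IH => //; lia.
  case: ifP => h'; first by apply: Inv_insb; apply: Inv_iter; right.
  by apply: Inv_insb; apply: Inv_iter; apply: IH => //; lia.
Qed.

Lemma Inv_ins n s x : vst n s -> Inv n s -> 0 < x <= n -> Inv n (ins n s x).
Proof.
move=> hv hI hx; rewrite /ins; case: eqP => h; first exact: Inv_insb.
case: s hv hI => e0 L hv hI; apply: Inv_insk => //; lia.
Qed.
Lemma Inv_F n s w : vst n s -> Inv n s -> word n w -> Inv n (F n s w).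
Proof.
elim: w s => //= x w IH s hv hI /andP [hx hw].
apply: IH => //; [exact: vst_ins | exact: Inv_ins].
Qed.

Definition Good n k (s : state) :=
  n < s.1 \/ (s.2 = [::] /\ n < s.1 + k) \/
  (exists y e P, s.2 = (y, e) :: P /\ (n < e + k \/ y = k + e \/ y + n = k + e)).

Lemma G1 n k m s : vst n s -> n < m + k -> Good n k (iter m (insb n) s).
Proof.
case: s => e0 [|[y e] P] hv h.
  by rewrite iter_nil /Good /=; right; left; split=> //; lia.
move: (hv); rewrite vst_cons => /and4P [_ he _ _].
have [e0' [e' [E [h1 [h2 [h3 h4]]]]]] := @iter_gen n m e0 y e P he.
rewrite E /Good /=.
case: (leqP (e + m) n) => hem.
  have [-> ->] := h3 hem; right; right; exists y, (e + m), P; split=> //; left; lia.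
by left; have := h4 hem; lia.
Qed.

Lemma G2 n j m s : vst n s -> Good n j s -> m < j -> Good n (j - m) (iter m (insb n) s).
Proof.
case: s => e0 L hv; rewrite /Good /= => -[h|[[hL h]|[y [e [P [hL h]]]]]] hm.
- by left; apply: leq_trans h (iter_mono _ _ (e0, L)).
- by subst L; rewrite iter_nil /=; right; left; split=> //; lia.
subst L; move: (hv); rewrite vst_cons => /and4P [_ he _ _].
have [e0' [e' [E [h1 [h2 [h3 h4]]]]]] := @iter_gen n m e0 y e P he.
rewrite E /=.
case: (leqP (e + m) n) => hem.
  have [-> ->] := h3 hem; right; right; exists y, (e + m), P; split=> //; lia.
by left; have := h4 hem; lia.
Qed.

Lemma ImK n e0 L k : vst n (e0, L) -> 0 < k < n -> Good n k (insk n e0 L k).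
Proof.
elim: L e0 k => [|[y e] P IH] e0 k hv hk.
  by rewrite /Good /=; right; right; exists k, 0, [::]; split=> //; lia.
have hP := vst_tail hv.
move: (hv); rewrite vst_cons => /and4P [hy _ _ _].
rewrite /=; case: ifP => hey.
  by rewrite /Good /=; right; right; exists k, 0, ((y, e) :: P); split=> //; lia.
case: ifP => h1.
  have := @G2 n (y + k) y _ (vst_insk hP _) (IH e0 (y + k) hP _).
  rewrite addKn; apply; lia.
case: ifP => h2.
  by apply: (@G1 n k y.+1 (e0, P)) => //; lia.
apply: (@G1 n k y.+1) => //; last lia.
apply: vst_insk => //; lia.
Qed.

Lemma Good_ins n s k : vst n s -> 0 < k <= n -> Good n k (ins n s k).
Proof.
move=> hv hk; rewrite /ins; case: eqP => h.
  by rewrite h; apply: (@G1 n n 1) => //; lia.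
case: s hv => e0 L hv; apply: ImK => //; lia.
Qed.

Lemma RDfin n t : vst n t -> 1 < n -> Good n 1 t -> Good n 2 t ->
  n < t.1 \/ (t.2 = [::] /\ n <= t.1) \/ (exists y e P, t.2 = (y, e) :: P /\ n <= e).
Proof.
case: t => e0 [|[y e] P] hv hn; rewrite /Good /=.
  move=> [h|[[_ h]|[y [e [P [h _]]]]]] _ //; [by left | by right; left; split=> //; lia].
move: (hv); rewrite vst_cons => /and4P [hy he _ _].
move=> [h|[[h _]|[y1 [e1 [P1 [[<- <- _] h]]]]]] //; first by left.
move=> [h'|[[h' _]|[y2 [e2 [P2 [[<- <- _] h']]]]]] //; first by left.
right; right; exists y, e, P; split=> //; lia.
Qed.

Lemma ldiv_gen n i : 1 <= i <= n -> ldiv n [:: i] (B n n).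
Proof.
move=> hi; case: (ltnP i n) => hin.
- exists (B n i ++ (n - i) :: B n (n - i).-1); split.
    rewrite word_cat word_B /=; last lia. rewrite word_B; last lia. rewrite andbT; lia.
  have G := @Grel n i (n - i) ltac:(lia) ltac:(lia) ltac:(lia).
  have -> : [:: i] ++ B n i ++ (n - i) :: B n (n - i).-1 =
     (i :: B n i ++ [:: n - i]) ++ B n (n - i).-1 by rewrite /= -catA.
  apply: meq_trans (meq_r _ G) _.
  have -> : i + (n - i) = n by lia.
  apply: meq_eq; rewrite cat_cons -nseqD.
  change (nseq (i + (n - i).-1).+1 n = nseq n n); congr nseq; lia.
- have -> : i = n by lia.
  exists (B n n.-1); split; first by apply: word_B; lia.
  apply: meq_eq; change (nseq n.-1.+1 n = nseq n n); congr nseq; lia.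
Qed.

Lemma rdiv_gen n i : 1 <= i <= n -> rdiv n [:: i] (B n n).
Proof.
move=> hi; case: (ltnP i n) => hin.
- exists (B n i.-1 ++ (n - i) :: B n (n - i)); split.
    rewrite word_cat word_B /=; last lia. rewrite word_B; last lia. rewrite andbT; lia.
  have G := @Grel n (n - i) i ltac:(lia) ltac:(lia) ltac:(lia).
  rewrite -catA; apply: meq_trans (meq_l _ G) _.
  have -> : n - i + i = n by lia.
  apply: meq_eq; change (B n i.-1 ++ B n (n - i).+1 = B n n).
  rewrite -nseqD; congr nseq; lia.
- have -> : i = n by lia.
  exists (B n n.-1); split; first by apply: word_B; lia.
  apply: meq_eq; rewrite cats1 -nseqS'; congr nseq; lia.
Qed.

Lemma third n : 1 <= n -> meq n (B n n) (1 :: flatten (nseq (n - 1) [:: n; 1])).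
Proof.
move=> hn.
have X j : j < n -> meq n (1 :: flatten (nseq j [:: n; 1])) (j.+1 :: B n j).
  elim: j => [|j IH] hj; first exact: meq_refl.
  have -> : 1 :: flatten (nseq j.+1 [:: n; 1]) = [:: 1; n] ++ (1 :: flatten (nseq j [:: n; 1])) by [].
  apply: meq_trans (meq_l _ (IH _)) _; first lia.
  have -> : [:: 1; n] ++ j.+1 :: B n j = [:: 1; n; j.+1] ++ B n j by [].
  apply: meq_trans (meq_r _ (R0 _)) _; first lia.
  exact: meq_refl.
apply: meq_sym; apply: meq_trans (X (n - 1) _) _; first lia.
apply: meq_eq; have E : (n - 1).+1 = n by lia.
rewrite {1}E; change (nseq (n - 1).+1 n = nseq n n); congr nseq; lia.
Qed.

Definition t0 : state := (0, [::]).
Lemma gen_i n i : 1 <= i <= n -> generators n [:: i].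
Proof. by move=> h; exists i. Qed.

Unset Implicit Arguments.
Theorem corollary4p16 (n : nat) (hn : 1 <= n) :
  is_right_lcm n (generators n) (nseq n n) /\
  is_left_lcm n (generators n) (nseq n n) /\
  meq n (nseq n n) (1 :: flatten (nseq (n - 1) [:: n; 1])).
Proof.
have wD : word n (B n n) by apply: word_B; lia.
have n0 : 0 < n by lia.
split; [|split; last exact: third].
- split=> //; split; first by move=> s [i hi ->]; exact: ldiv_gen.
  move=> w hw H.
  case: (ltnP 1 n) => hn2; last first.
    have -> : n = 1 by lia.
    have := H [:: 1] (@gen_i n 1 ltac:(lia)).
    by have -> : n = 1 by lia.
  have [c1 [hc1 m1]] := H [:: n.-1] (@gen_i n n.-1 ltac:(lia)).
  have [c2 [hc2 m2]] := H [:: n] (@gen_i n n ltac:(lia)).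
  set t := F n t0 w.
  have hvt : vst n t by apply: vst_F.
  have E1 : t = F n (ins n t0 n.-1) c1.
    rewrite /t -(F_meq m1) //; rewrite word_cat hc1 andbT /=; lia.
  have E2 : t = F n (ins n t0 n) c2.
    rewrite /t -(F_meq m2) //; rewrite word_cat hc2 andbT /=; lia.
  have hI : Inv n t.
    rewrite E1; apply: Inv_F => //.
      apply: vst_ins => //; lia.
    rewrite ins_lt /=; last lia.
    by right; split=> //; split=> //; left.
  have h1 : 1 <= t.1 by rewrite E2; apply: leq_trans (F_mono _ _ _); rewrite ins_n.
  have ht : n <= t.1 by case: hI => // -[h _]; lia.
  exists (B n (t.1 - n) ++ wl n t.2); split.
    rewrite word_cat word_B //=; case/andP: hvt => hb _; exact: word_wl.
  have S := @snd_F n t0 w (vst_nil n 0) hw.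
  rewrite /wst /= in S.
  rewrite Bc; have -> : n + (t.1 - n) = t.1 by lia.
  exact: S.
- split=> //; split; first by move=> s [i hi ->]; exact: rdiv_gen.
  move=> w hw H.
  case: (ltnP 1 n) => hn2; last first.
    have -> : n = 1 by lia.
    have := H [:: 1] (@gen_i n 1 ltac:(lia)).
    by have -> : n = 1 by lia.
  have [c1 [hc1 m1]] := H [:: 1] (@gen_i n 1 ltac:(lia)).
  have [c2 [hc2 m2]] := H [:: 2] (@gen_i n 2 ltac:(lia)).
  set t := F n t0 w.
  have hvt : vst n t by apply: vst_F.
  have E1 : t = ins n (F n t0 c1) 1.
    rewrite /t -(F_meq m1) //; first by rewrite F_cat.
    rewrite word_cat hc1 /=; lia.
  have E2 : t = ins n (F n t0 c2) 2.
    rewrite /t -(F_meq m2) //; first by rewrite F_cat.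
    rewrite word_cat hc2 /=; lia.
  have g1 : Good n 1 t by rewrite E1; apply: Good_ins; [exact: vst_F | lia].
  have g2 : Good n 2 t by rewrite E2; apply: Good_ins; [exact: vst_F | lia].
  have S := @snd_F n t0 w (vst_nil n 0) hw.
  rewrite /wst /= -/t in S.
  have hb : all (bok n) t.2 by case/andP: hvt.
  have wl_w := word_wl n0 hb.
  case: (RDfin hvt hn2 g1 g2) => [h|[[hL h]|[y [e [P [hL h]]]]]].
  + exists (B n (t.1 - n.+1) ++ wl n t.2 ++ [:: n]); split.
      by rewrite !word_cat word_B //= wl_w /=; lia.
    apply: meq_trans _ S.
    rewrite -!catA /= -/(B n n.+1).
    have -> : B n t.1 = B n (t.1 - n.+1) ++ B n n.+1 by rewrite -nseqD; congr nseq; lia.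
    rewrite -catA; apply: meq_l; apply: Zw => //.
  + exists (B n (t.1 - n)); split; first exact: word_B.
    apply: meq_trans _ S; rewrite hL cats0 -nseqD; apply: meq_eq; congr nseq; lia.
  + move: hb; rewrite hL /= => /andP [hb hbP].
    move: hb; rewrite /bok /= => /andP [hy he].
    exists (B n t.1 ++ wl n P ++ y :: B n (e - n)); split.
      rewrite !word_cat word_B //= word_wl //= word_B //= andbT; lia.
    apply: meq_trans _ S; rewrite hL /= -!catA /=; apply: meq_eq.
    do 2 congr (_ ++ _); congr (_ :: _); rewrite -nseqD; congr nseq; lia.
Qed.
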